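(* Let $n$ be an integer and let $\omega\in\mathbb C$ be a root of $\Delta_n=S_n'S_{n-1}-S_nS_{n-1}'$. If $n>0$ then $|h_n(\omega)|>1$, and if $n<0$ then $|h_n(\omega)|<1$, where $h_n=S_n/S_{n-1}$.
   Context: The Chebyshev polynomials $S_j(\omega)$ are defined for all integers $j$ by $S_0=1$, $S_1=\omega$, $S_{j+1}=\omega S_j-S_{j-1}$; primes denote derivatives with respect to $\omega$. *)

(* Defs.v *)
From HB Require Import structures.
From mathcomp Require Import all_boot all_order all_algebra.
From mathcomp Require Export complex.
From mathcomp Require Export reals.
Set Implicit Arguments. Unset Strict Implicit. Unset Printing Implicit Defensive.
Import Order.TTheory GRing.Theory Num.Theory.
Local Open Scope ring_scope.

Section Cheb.
Variable C : numClosedFieldType.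

Fixpoint Spos (k : nat) : {poly C} :=
  match k with
  | 0 => 1
  | 1 => 'X
  | (m.+1 as k1).+1 => 'X * Spos k1 - Spos m
  end.

(* Backward recurrence S_{j-1} = w S_j - S_{j+1}: Sneg k = S_{-k}. *)
Fixpoint Sneg (k : nat) : {poly C} :=
  match k with
  | 0 => 1
  | 1 => 0
  | (m.+1 as k1).+1 => 'X * Sneg k1 - Sneg m
  end.

Definition Scheb (j : int) : {poly C} :=
  match j with
  | Posz k => Spos k
  | Negz k => Sneg k.+1   (* Negz k = -(k+1) *)
  end.

Definition Delta (n : int) : {poly C} :=
  (Scheb n)^`() * Scheb (n - 1) - Scheb n * (Scheb (n - 1))^`().

Definition hfun (n : int) (w : C) : C := (Scheb n).[w] / (Scheb (n - 1)).[w].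
End Cheb.
Arguments Scheb {C} j.
Arguments Delta {C} n.
Arguments hfun {C} n w.

(* Main.v *)
Require Import Defs.
From HB Require Import structures.
From mathcomp Require Import all_boot all_order all_algebra.
From mathcomp Require Import complex reals.
From mathcomp Require Import ring zify.
Import Order.TTheory GRing.Theory Num.Theory.
Local Open Scope ring_scope.

Section S.
Variable C : numClosedFieldType.


Lemma SposSS k : Spos C k.+2 = 'X * Spos C k.+1 - Spos C k.
Proof. by []. Qed.

Definition Dk k := (Spos C k.+1)^`() * Spos C k - Spos C k.+1 * (Spos C k)^`().

Lemma Dk_sum k : Dk k = \sum_(i < k.+1) Spos C i ^+ 2.
Proof.
elim: k => [|k IH].
  by rewrite /Dk big_ord1 /= derivX -[1 : {poly C}]polyC1 derivC mulr1 mulr0 subr0 expr1n.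
rewrite big_ord_recr -IH /Dk SposSS derivB derivM derivX.
set s1 := Spos C k.+1. set s0 := Spos C k.
rewrite /=. ring.
Qed.

Lemma Delta_pos k : Delta (Posz k.+1) = Dk k.
Proof.
rewrite /Delta /Dk.
have -> : (Posz k.+1 - 1 = Posz k)%R by rewrite -addn1 PoszD addrK.
by [].
Qed.



Lemma hs (w : C) i : (Spos C i.+2).[w] = w * (Spos C i.+1).[w] - (Spos C i).[w].
Proof. rewrite SposSS hornerD hornerN. by rewrite [('X * _)]mulrC hornerMX mulrC. Qed.

Lemma s0 (w : C) : (Spos C 0).[w] = 1.
Proof. by rewrite /= hornerC. Qed.
Lemma s1 (w : C) : (Spos C 1).[w] = w.
Proof. by rewrite /= hornerX. Qed.

Lemma two_neq0 : (2 : C) != 0. Proof. by rewrite pnatr_eq0. Qed.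

Lemma exists_q (w : C) : exists q : C, q != 0 /\ w = q + q^-1.
Proof.
set r := sqrtC (w ^+ 2 - 4).
have hr : r ^+ 2 = w ^+ 2 - 4 by rewrite sqrtCK.
set q := (w + r) / 2.
have hq : q ^+ 2 - w * q + 1 = 0.
  have -> : q ^+ 2 - w * q + 1 = (r ^+ 2 - (w ^+ 2 - 4)) / 4.
    by rewrite /q; field.
  by rewrite hr subrr mul0r.
have qnz : q != 0.
  by apply/eqP => q0; move: hq; rewrite q0 expr0n mulr0 subrr add0r => /eqP; rewrite oner_eq0.
exists q; split => //.
have e : w * q = q ^+ 2 + 1.
  have : q ^+ 2 + 1 - w * q = 0 by rewrite -hq; ring.
  by move/eqP; rewrite subr_eq0 => /eqP.
by rewrite -(mulfK qnz w) e; field.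
Qed.


Lemma L1 {x : C} k : 0 <= x -> x != 1 -> 0 < (x - 1) * (x * (x ^+ k) ^+ 2 - 1).
Proof.
move=> x0 x1.
have -> : x * (x ^+ k) ^+ 2 = x ^+ (k + k).+1 by rewrite -exprM [in RHS]exprS muln2 addnn.
have xr : x \is Num.real by apply: ger0_real.
case: (real_ltgtP xr (real1 C)) => h.
- rewrite nmulr_rgt0 ?subr_lt0 //; by rewrite exprn_ilt1.
- rewrite pmulr_rgt0 ?subr_gt0 //; by rewrite exprn_egt1.
- by rewrite h eqxx in x1.
Qed.

Lemma key (q X a b : C) (m k : nat) (qnz : q != 0) (Xnz : X != 0)
  (cnz : q - q^-1 != 0) (m0 : (0 < m)%N)
  (ha : (q - q^-1) * a = q * X - (q * X)^-1) (hb : (q - q^-1) * b = X - X^-1)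
  (E : q * X * X - (q * X * X)^-1 = m.+1%:R * (q - q^-1))
  (htau : X * X^* = (q * q^*) ^+ k) :
  b != 0 /\ `|b| < `|a|.
Proof.
split.
  apply/eqP => b0.
  move: hb; rewrite b0 mulr0 => /esym/eqP; rewrite subr_eq0 => /eqP hX.
  have XX : q * X * X = q by rewrite -mulrA [X in q * (X * _)]hX mulVf // mulr1.
  move: E; rewrite XX => /eqP; rewrite -subr_eq0.
  have -> : q - q^-1 - m.+1%:R * (q - q^-1) = - (m%:R * (q - q^-1)).
    by rewrite -addn1 natrD; ring.
  by rewrite oppr_eq0 mulf_eq0 pnatr_eq0 (gtn_eqF m0) (negPf cnz).
have qbnz : q^* != 0 by rewrite conjC_eq0.
have Xbnz : X^* != 0 by rewrite conjC_eq0.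
have cb : (q - q^-1)^* = q^* - (q^*)^-1 by rewrite rmorphB fmorphV.
have hab : (q^* - (q^*)^-1) * a^* = q^* * X^* - (q^* * X^*)^-1.
  by rewrite -cb -rmorphM ha rmorphB fmorphV rmorphM.
have hbb : (q^* - (q^*)^-1) * b^* = X^* - (X^*)^-1.
  by rewrite -cb -rmorphM hb rmorphB fmorphV.
have Eb : q^* * X^* * X^* - (q^* * X^* * X^*)^-1 = m.+1%:R * (q^* - (q^*)^-1).
  by rewrite -cb -(conjC_nat C m.+1) -[RHS]rmorphM -E rmorphB fmorphV !rmorphM.
have rho_gt0 : 0 < q * q^* by rewrite -normCK exprn_gt0 // normr_gt0.
have tau_gt0 : 0 < X * X^* by rewrite -normCK exprn_gt0 // normr_gt0.
have Q_gt0 : 0 < (q * X * X) * (q^* * X^* * X^*).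
  by rewrite -!rmorphM -normCK exprn_gt0 // normr_gt0 !mulf_neq0.
have hD1 : (q * X - (q * X)^-1) * (q^* * X^* - (q^* * X^*)^-1)
        - (X - X^-1) * (X^* - (X^*)^-1)
    = ((q - q^-1) * (q - q^-1)^*) * (a * a^* - b * b^*).
  rewrite -ha -hb -hab -hbb cb. ring.
have hD2 : (q * q^*) * (X * X^*) * ((q * X - (q * X)^-1) * (q^* * X^* - (q^* * X^*)^-1)
        - (X - X^-1) * (X^* - (X^*)^-1))
    = (q * q^* - 1) * (q * q^* * (X * X^*) ^+ 2 - 1)
      + - ((q - q^*) * (q * X * X - q^* * X^* * X^*)).
  by field; apply/and4P; split.
set Q := q * X * X.
set Qb := q^* * X^* * X^*.
have Qnz : Q != 0 by rewrite /Q !mulf_neq0.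
have Qbnz : Qb != 0 by rewrite /Qb !mulf_neq0.
have hrel : (Q - Qb) * (1 + (Q * Qb)^-1) = m.+1%:R * (q - q^*) * (1 + (q * q^*)^-1).
  transitivity ((Q - Q^-1) - (Qb - Qb^-1)).
    by field; apply/andP; split.
  rewrite E Eb; field; by apply/andP; split.
have den_gt0 : 0 < 1 + (Q * Qb)^-1 by rewrite addr_gt0 // invr_gt0.
have hα : - ((q - q^*) * (Q - Qb))
    = m.+1%:R * ((q - q^*) * (q - q^*)^*) * (1 + (q * q^*)^-1) / (1 + (Q * Qb)^-1).
  have dnz : 1 + (Q * Qb)^-1 != 0 by rewrite gt_eqF.
  have -> : Q - Qb = m.+1%:R * (q - q^*) * (1 + (q * q^*)^-1) / (1 + (Q * Qb)^-1).
    by rewrite -hrel mulfK.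
  have qc : (q - q^*)^* = q^* - q by rewrite rmorphB /= conjCK.
  rewrite qc; ring.
have rinv_ge0 : 0 <= 1 + (q * q^*)^-1 by rewrite addr_ge0 // invr_ge0 ltW.
have α_ge0 : 0 <= - ((q - q^*) * (Q - Qb)).
  rewrite hα; apply: divr_ge0; last exact: ltW.
  apply: mulr_ge0 => //; apply: mulr_ge0; first exact: ler0n.
  by rewrite -normCK exprn_ge0.
have Dpos : 0 < (q * X - (q * X)^-1) * (q^* * X^* - (q^* * X^*)^-1)
        - (X - X^-1) * (X^* - (X^*)^-1).
  rewrite -(pmulr_rgt0 _ (mulr_gt0 rho_gt0 tau_gt0)) hD2.
  have [r1|r1] := eqVneq (q * q^*) 1.
    rewrite r1 subrr mul0r add0r hα; apply: divr_gt0 => //.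
    have qq : q - q^* != 0.
      apply/eqP => /eqP; rewrite subr_eq0 => /eqP qe.
      move: cnz; rewrite -qe in r1.
      have -> : q - q^-1 = (q * q - 1) / q by field.
      by rewrite r1 subrr mul0r eqxx.
    apply: mulr_gt0; last by rewrite r1 invr1 addr_gt0 ?ltr01.
    apply: mulr_gt0; first by rewrite ltr0n.
    by rewrite -normCK exprn_gt0 // normr_gt0.
  rewrite htau; apply: (lt_le_trans (L1 k (ltW rho_gt0) r1)).
  by rewrite lerDl; exact: α_ge0.
have cc_gt0 : 0 < (q - q^-1) * (q - q^-1)^* by rewrite -normCK exprn_gt0 // normr_gt0.
move: Dpos; rewrite hD1 pmulr_rgt0 // subr_gt0 -!normCK.
by rewrite ltr_pXn2r // qualifE /=.
Qed.

Lemma core (q : C) (qnz : q != 0) (N : nat) (s : nat -> C)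
  (hs0 : s 0%N = 1) (hs1 : s 1%N = q + q^-1)
  (hsS : forall i, s i.+2 = (q + q^-1) * s i.+1 - s i)
  (hsum : \sum_(i < N.+1) s i ^+ 2 = 0) :
  s N != 0 /\ `|s N| < `|s N.+1|.
Proof.
pose U j := q ^+ j - (q ^+ j)^-1.
have hU2 : forall i, (q - q^-1) * s i = U i.+1 /\ (q - q^-1) * s i.+1 = U i.+2.
  elim => [|i [IH1 IH2]].
    rewrite hs0 hs1 /U expr1 expr2; split; field => //.
  split => //.
  rewrite hsS.
  have -> : (q - q^-1) * ((q + q^-1) * s i.+1 - s i)
     = (q + q^-1) * ((q - q^-1) * s i.+1) - (q - q^-1) * s i by ring.
  rewrite IH1 IH2 /U !exprS.
  have Xnz : q ^+ i != 0 by rewrite expf_neq0.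
  by field; apply/andP; split.
have hU i : (q - q^-1) * s i = U i.+1 by case: (hU2 i).
have hsumU : forall M, (q - q^-1) * \sum_(i < M) U i.+1 ^+ 2
    = U (M + M).+1 - ((M + M).+1)%:R * (q - q^-1).
  elim => [|M IH].
    by rewrite big_ord0 mulr0 /U expr1 mul1r subrr.
  rewrite big_ord_recr /= mulrDr IH /U.
  have -> : (M.+1 + M.+1).+1 = (M + M).+3 by rewrite addSn addnS.
  have -> : ((M + M).+3)%:R = ((M + M).+1)%:R + 2 :> C.
    by rewrite -natrD addn2.
  rewrite !exprS exprD.
  have Xnz : q ^+ M != 0 by rewrite expf_neq0.
  by field; apply/andP; split.
have cnz : q - q^-1 != 0.
  apply/eqP => c0.
  have qi : q^-1 = q by apply/esym/eqP; rewrite -subr_eq0 c0.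
  have q2 : q * q = 1 by rewrite -{1}qi mulVf.
  have hsq : forall i, s i = (i.+1)%:R * q ^+ i /\ s i.+1 = (i.+2)%:R * q ^+ i.+1.
    elim => [|i [IH1 IH2]].
      rewrite hs0 hs1 qi; split; first by rewrite expr0 mulr1.
      by rewrite expr1 mulr_natl mulr2n.
    split => //.
    rewrite hsS IH1 IH2 qi !exprS.
    set Y := q ^+ i.
    rewrite -[i.+3]addn3 -[i.+2]addn2 -[i.+1]addn1 !natrD.
    apply/eqP; rewrite -subr_eq0.
    have -> : (q + q) * ((i%:R + 2%:R) * (q * Y)) - (i%:R + 1%:R) * Y -
       (i%:R + 3%:R) * (q * (q * Y)) = (i%:R + 1) * Y * (q * q - 1) by ring.
    by rewrite q2 subrr mulr0.
  move: hsum.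
  have -> : \sum_(i < N.+1) s i ^+ 2 = \sum_(i < N.+1) ((i.+1) ^ 2)%:R.
    apply: eq_bigr => i _.
    have [-> _] := hsq i.
    by rewrite exprMn natrX -exprM [(i * 2)%N]mulnC exprM [q ^+ 2]expr2 q2 expr1n mulr1.
  rewrite -natr_sum => /eqP; rewrite pnatr_eq0 big_ord_recl /=.
  by [].
have hΣ : \sum_(i < N.+1) U i.+1 ^+ 2 = 0.
  under eq_bigr => i _ do rewrite -hU exprMn.
  by rewrite -mulr_sumr hsum mulr0.
have := hsumU N.+1; rewrite hΣ mulr0 => /esym/eqP; rewrite subr_eq0 => /eqP E.
have Xnz : q ^+ N.+1 != 0 by rewrite expf_neq0.
have ha : (q - q^-1) * s N.+1 = q * q ^+ N.+1 - (q * q ^+ N.+1)^-1.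
  by rewrite hU /U [in LHS]exprS.
have hb : (q - q^-1) * s N = q ^+ N.+1 - (q ^+ N.+1)^-1 by rewrite hU.
have E' : q * q ^+ N.+1 * q ^+ N.+1 - (q * q ^+ N.+1 * q ^+ N.+1)^-1
    = (N.+1 + N.+1).+1%:R * (q - q^-1).
  by move: E; rewrite /U exprS exprD mulrA.
have ht : q ^+ N.+1 * (q ^+ N.+1)^* = (q * q^*) ^+ N.+1 by rewrite rmorphXn -exprMn.
exact: (@key q (q ^+ N.+1) (s N.+1) (s N) (N.+1 + N.+1) N.+1 qnz Xnz cnz isT ha hb E' ht).
Qed.

Lemma SnegSS j : Sneg C j.+2 = - Spos C j.
Proof.
have H : forall j, Sneg C j.+2 = - Spos C j /\ Sneg C j.+3 = - Spos C j.+1.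
  elim => [|i [IH1 IH2]].
    by split; rewrite /= ?mulr0 ?sub0r // mulrN1 subr0.
  split => //.
  rewrite [Sneg C i.+4]/= -/(Sneg C i.+3) -/(Sneg C i.+2) IH1 IH2 SposSS.
  set a := Spos C i.+1; set b := Spos C i. ring.
by case: (H j).
Qed.

Lemma pos_case N (w : C) : root (Delta (Posz N.+1)) w -> 1 < `|hfun (Posz N.+1) w|.
Proof.
rewrite Delta_pos Dk_sum => /rootP; rewrite horner_sum => hsum.
have hsum' : \sum_(i < N.+1) (Spos C i).[w] ^+ 2 = 0.
  by rewrite -[RHS]hsum; apply: eq_bigr => i _; rewrite horner_exp.
have [q [qnz hw]] := exists_q w.
have := @core q qnz N (fun i => (Spos C i).[w]).
rewrite s0 s1 -hw => /(_ erefl erefl) [].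
- by move=> i; rewrite hs hw.
- exact: hsum'.
move=> bnz lt.
rewrite /hfun.
have -> : (Posz N.+1 - 1 = Posz N)%R by lia.
rewrite normrM normfV ltr_pdivlMr ?mul1r //.
by rewrite normr_gt0.
Qed.
End S.

Theorem lemma5p4 (R : realType) (n : int) (w : R[i]) :
  root (Delta n) w ->
  ((0 < n)%R -> 1 < `|hfun n w|) /\ (n < 0 -> `|hfun n w| < 1).
Proof.
case: n => [[|N]|k] hr; split => // h.
- exact: (@pos_case _ _ _ hr).
- case: k hr h => [|K] hr _.
    by rewrite /hfun /= horner0 mul0r normr0 ltr01.
  have e : (Negz K.+1 - 1 = Negz K.+2)%R by lia.
  have e1 : Scheb (Negz K.+1) = Sneg (R[i]) K.+2 := erefl.
  have e2 : Scheb (Negz K.+2) = Sneg (R[i]) K.+3 := erefl.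
  have hr' : root (Delta (Posz K.+1)) w.
    rewrite Delta_pos /Dk; move: hr; rewrite /Delta e e1 e2 !SnegSS.
    rewrite !derivN !mulNr !mulrN !opprK.
    move=> /rootP h0; apply/rootP.
    have -> : (Spos (R[i]) K.+1)^`() * Spos (R[i]) K - Spos (R[i]) K.+1 * (Spos (R[i]) K)^`()
      = - ((Spos (R[i]) K)^`() * Spos (R[i]) K.+1 - Spos (R[i]) K * (Spos (R[i]) K.+1)^`()) by ring.
    by rewrite hornerN h0 oppr0.
  have := @pos_case _ _ _ hr'.
  rewrite /hfun e e1 e2 !SnegSS !hornerN invrN mulrNN.
  have -> : (Posz K.+1 - 1 = Posz K)%R by lia.
  set a := (Spos _ K.+1).[w]; set b := (Spos _ K).[w].
  move=> lt.
  have -> : b / a = (a / b)^-1 by rewrite invf_div.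
  by rewrite normfV invf_lt1 // (lt_trans ltr01 lt).
Qed.
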